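(* For every acute triangle $ABC$ with $a<b<c$, letting $t_n$ denote the signed distance from $\mathrm{Atrace}(X_n)$ to $C$, we have $$t_{20}>t_{22}>t_3>t_8>t_9>t_{21}>t_{10}>t_2>t_1>t_{17}>t_{12}>t_7>t_{13}>t_{29}>t_4>t_{27}>t_{19}>t_{28}>t_{25}>t_{24}>t_{23}.$$ Equivalently, in the trace order, $X_{20}\prec X_{22}\prec X_3\prec X_8\prec X_9\prec X_{21}\prec X_{10}\prec X_2\prec X_1\prec X_{17}\prec X_{12}\prec X_7\prec X_{13}\prec X_{29}\prec X_4\prec X_{27}\prec X_{19}\prec X_{28}\prec X_{25}\prec X_{24}\prec X_{23}$.
   Context: $X_n$ denotes the $n$-th triangle center listed in Kimberling's Encyclopedia of Triangle Centers (ETC), given by barycentric coordinates in terms of $a=BC$, $b=CA$, $c=AB$. For a point $P\ne A$, $\mathrm{Atrace}(P)$ is the intersection of line $AP$ with line $BC$ (for $P=(p:q:r)$ it is $(0:q:r)$). For a point $X$ on line $BC$, the signed distance from $X$ to $C$ is the distance $XC$ if $X$ lies on the ray from $C$ through $B$, and $-XC$ if $X$ lies on the extension of $BC$ beyond $C$; for $P=(p:q:r)$ this equals $aq/(q+r)$. The trace order is defined by: $P\prec Q$ if the signed distance from $\mathrm{Atrace}(P)$ to $C$ is greater than that of $\mathrm{Atrace}(Q)$ in every acute triangle $ABC$ with $a<b<c$. *)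

(* Defs.v *)
(* Triangle centers of ETC given by barycentric coordinates
   as functions of the side lengths a = BC, b = CA, c = AB over a real closed
   field R (e.g. the real numbers). *)
From mathcomp Require Import all_boot all_order all_algebra.
Set Implicit Arguments. Unset Strict Implicit. Unset Printing Implicit Defensive.
Import Order.TTheory GRing.Theory Num.Theory.
Local Open Scope ring_scope.

Section Centers.
Variable R : rcfType.

(* homogeneous barycentric coordinates (p : q : r) *)
Record bary := Bary { bp : R; bq : R; br : R }.

Definition cyclic_pt (f : R -> R -> R -> R) (a b c : R) : bary :=
  Bary (f a b c) (f b c a) (f c a b).

(* S = twice the area of ABC (Conway notation), via Heron's formula *)
Definition S2 (a b c : R) : R :=
  Num.sqrt (2 * a^+2 * b^+2 + 2 * b^+2 * c^+2 + 2 * c^+2 * a^+2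
            - a^+4 - b^+4 - c^+4) / 2.
Definition SA (a b c : R) : R := (b^+2 + c^+2 - a^+2) / 2.
Definition cosA (a b c : R) : R := (b^+2 + c^+2 - a^+2) / (2 * b * c).
(* cos B + cos C, seen from vertex A *)
Definition cosBC (a b c : R) : R := cosA b c a + cosA c a b.

Definition X1 := cyclic_pt (fun a b c => a).
Definition X2 := cyclic_pt (fun a b c => 1).
Definition X3 := cyclic_pt (fun a b c => a^+2 * (b^+2 + c^+2 - a^+2)).
Definition X4 := cyclic_pt (fun a b c => (SA a b c)^-1).
Definition X7 := cyclic_pt (fun a b c => (b + c - a)^-1).
Definition X8 := cyclic_pt (fun a b c => b + c - a).
Definition X9 := cyclic_pt (fun a b c => a * (b + c - a)).
Definition X10 := cyclic_pt (fun a b c => b + c).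
Definition X12 := cyclic_pt (fun a b c => (b + c)^+2 / (b + c - a)).
(* trilinears csc(A + pi/3) *)
Definition X13 (a b c : R) :=
  cyclic_pt (fun a' b' c' => (Num.sqrt 3 * SA a' b' c' + S2 a b c)^-1) a b c.
(* trilinears csc(A + pi/6) *)
Definition X17 (a b c : R) :=
  cyclic_pt (fun a' b' c' => (SA a' b' c' + Num.sqrt 3 * S2 a b c)^-1) a b c.
(* trilinears tan A *)
Definition X19 := cyclic_pt (fun a b c => a / SA a b c).
Definition X20 := cyclic_pt (fun a b c =>
  3 * a^+4 - 2 * a^+2 * (b^+2 + c^+2) - (b^+2 - c^+2)^+2).
(* trilinears 1/(cos B + cos C) *)
Definition X21 := cyclic_pt (fun a b c => a / cosBC a b c).
Definition X22 := cyclic_pt (fun a b c => a^+2 * (b^+4 + c^+4 - a^+4)).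
Definition X23 := cyclic_pt (fun a b c =>
  a^+2 * (b^+4 + c^+4 - a^+4 - b^+2 * c^+2)).
(* trilinears sec A cos 2A *)
Definition X24 := cyclic_pt (fun a b c =>
  a^+2 * (a^+4 + b^+4 + c^+4 - 2 * a^+2 * b^+2 - 2 * a^+2 * c^+2)
  / (b^+2 + c^+2 - a^+2)).
(* trilinears sin A tan A *)
Definition X25 := cyclic_pt (fun a b c => a^+2 / SA a b c).
(* trilinears sec A / (b + c) *)
Definition X27 := cyclic_pt (fun a b c => ((b + c) * SA a b c)^-1).
(* trilinears tan A / (b + c) *)
Definition X28 := cyclic_pt (fun a b c => a / ((b + c) * SA a b c)).
(* trilinears sec A / (cos B + cos C) *)
Definition X29 := cyclic_pt (fun a b c => (SA a b c * cosBC a b c)^-1).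

(* A-trace: intersection of AP with BC *)
Definition Atrace (P : bary) : bary := Bary 0 (bq P) (br P).

(* signed distance to C of a point X = (0 : q : r) on line BC *)
Definition sdistC (a : R) (X : bary) : R := a * bq X / (bq X + br X).

Definition tdist (a : R) (P : bary) : R := sdistC a (Atrace P).

End Centers.

(* Main.v *)
Require Import Defs.
From mathcomp Require Import all_boot all_order all_algebra.
From mathcomp Require Import ring lra.
Import Order.TTheory GRing.Theory Num.Theory.
Local Open Scope ring_scope.

Ltac pos := repeat match goal with
 | H : is_true (0 < ?x) |- is_true (0 < ?x) => exact H
 | |- is_true (0 < _ + _) => apply: addr_gt0
 | |- is_true (0 < _ * _) => apply: mulr_gt0
 | |- is_true (0 < _ ^+ _) => apply: exprn_gt0
 | |- is_true (0 < _%:R) => by rewrite ltr0n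
 | |- is_true (0 < 1) => exact: ltr01
 end.

Section Aux.
Variable R : rcfType.

Lemma cert_gen (d : nat) (Y X : R) : (0 < d)%N -> d%:R * X = Y -> 0 < Y -> 0 < X.
Proof.
move=> hd e hY. have hd' : 0 < (d%:R : R) by rewrite ltr0n.
by rewrite -(pmulr_rgt0 _ hd') e.
Qed.

Lemma c38 (a b c : R) : 0 < a -> a < b -> b < c -> c < a + b ->
  c^+2 < a^+2 + b^+2 -> 0 < (-(a^+2*b) - a^+2*c + 2*a*b*c + b^+3 - b^+2*c - b*c^+2 + c^+3).
Proof.
move=> ha hab hbc htri hac.
have [w [u [v [hw [hu [hv [ea [eb ec]]]]]]]] : exists w u v, 0 < w /\ 0 < u /\ 0 < v /\
  a = w + u /\ b = w + u + v /\ c = w + 2*u + v.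
  exists (a+b-c), (c-b), (b-a); do 6?split; (lra || ring).
subst a b c.
have hK : 0 < (w^+2 - 2*u^+2 - 2*u*v).
  have e : (w+u)^+2 + (w+u+v)^+2 - (w+2*u+v)^+2 = (w^+2 - 2*u^+2 - 2*u*v) by ring.
  by rewrite -e subr_gt0.
apply: (@cert_gen 1%N ((w^+2 - 2*u^+2 - 2*u*v) * ((2*v) + u) + ((6*u*v^+2) + ((1*10+2)*u^+2*v) + (6*u^+3) + (2*w*v^+2) + (6*w*u*v) + (4*w*u^+2)))); [done | ring | pos].
Qed.

Lemma c2110 (a b c : R) : 0 < a -> a < b -> b < c -> c < a + b ->
  c^+2 < a^+2 + b^+2 -> 0 < (b^+2 - b*c + c^+2 - a^+2).
Proof.
move=> ha hab hbc htri hac.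
have [w [u [v [hw [hu [hv [ea [eb ec]]]]]]]] : exists w u v, 0 < w /\ 0 < u /\ 0 < v /\
  a = w + u /\ b = w + u + v /\ c = w + 2*u + v.
  exists (a+b-c), (c-b), (b-a); do 6?split; (lra || ring).
subst a b c.
have hK : 0 < (w^+2 - 2*u^+2 - 2*u*v).
  have e : (w+u)^+2 + (w+u+v)^+2 - (w+2*u+v)^+2 = (w^+2 - 2*u^+2 - 2*u*v) by ring.
  by rewrite -e subr_gt0.
apply: (@cert_gen 1%N (v^+2 + (3*u*v) + (2*u^+2) + (2*w*v) + (w*u))); [done | ring | pos].
Qed.

Lemma c2423 (a b c : R) : 0 < a -> a < b -> b < c -> c < a + b ->
  c^+2 < a^+2 + b^+2 -> 0 < (a^+6 - a^+4*b^+2 - a^+4*c^+2 - a^+2*b^+4 + 6*a^+2*b^+2*c^+2 - a^+2*c^+4 + b^+6 - b^+4*c^+2 - b^+2*c^+4 + c^+6).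
Proof.
move=> ha hab hbc htri hac.
have [w [u [v [hw [hu [hv [ea [eb ec]]]]]]]] : exists w u v, 0 < w /\ 0 < u /\ 0 < v /\
  a = w + u /\ b = w + u + v /\ c = w + 2*u + v.
  exists (a+b-c), (c-b), (b-a); do 6?split; (lra || ring).
subst a b c.
have hK : 0 < (w^+2 - 2*u^+2 - 2*u*v).
  have e : (w+u)^+2 + (w+u+v)^+2 - (w+2*u+v)^+2 = (w^+2 - 2*u^+2 - 2*u*v) by ring.
  by rewrite -e subr_gt0.
apply: (@cert_gen 1%N ((w^+2 - 2*u^+2 - 2*u*v) * ((4*v^+4) + ((10*10)*u*v^+3) + (((4*10+7)*10+2)*u^+2*v^+2) + (((7*10+4)*10+4)*u^+3*v) + (((3*10+7)*10+2)*u^+4) + ((1*10+6)*w*v^+3) + (((1*10+3)*10+6)*w*u*v^+2) + (((3*10+1)*10+2)*w*u^+2*v) + (((2*10)*10+8)*w*u^+3) + ((2*10+2)*w^+2*v^+2) + ((8*10+8)*w^+2*u*v) + ((8*10+8)*w^+2*u^+2) + ((1*10+2)*w^+3*v) + ((2*10+4)*w^+3*u) + (3*w^+4)) + ((8*u*v^+5) + (((2*10+2)*10)*u^+2*v^+4) + ((((1*10+2)*10+1)*10+6)*u^+3*v^+3) + ((((2*10+5)*10+8)*10+8)*u^+4*v^+2) + ((((2*10+3)*10+7)*10+6)*u^+5*v) + (((7*10+9)*10+2)*u^+6) + ((4*10)*w*u*v^+4) + (((4*10)*10)*w*u^+2*v^+3) + ((((1*10+2)*10)*10)*w*u^+3*v^+2)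 + ((((1*10+4)*10)*10)*w*u^+4*v) + (((5*10+6)*10)*w*u^+5)))); [done | ring | pos].
Qed.

Lemma c23s (a b c : R) : 0 < a -> a < b -> b < c -> c < a + b ->
  c^+2 < a^+2 + b^+2 -> 0 < (-(b^+2*(c^+4+a^+4-b^+4-c^+2*a^+2) + c^+2*(a^+4+b^+4-c^+4-a^+2*b^+2))).
Proof.
move=> ha hab hbc htri hac.
have [w [u [v [hw [hu [hv [ea [eb ec]]]]]]]] : exists w u v, 0 < w /\ 0 < u /\ 0 < v /\
  a = w + u /\ b = w + u + v /\ c = w + 2*u + v.
  exists (a+b-c), (c-b), (b-a); do 6?split; (lra || ring).
subst a b c.
have hK : 0 < (w^+2 - 2*u^+2 - 2*u*v).
  have e : (w+u)^+2 + (w+u+v)^+2 - (w+2*u+v)^+2 = (w^+2 - 2*u^+2 - 2*u*v) by ring.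
  by rewrite -e subr_gt0.
apply: (@cert_gen 1%N ((w^+2 - 2*u^+2 - 2*u*v) * ((2*v^+4) + ((4*10+8)*u*v^+3) + (((2*10+2)*10+6)*u^+2*v^+2) + (((3*10+5)*10+4)*u^+3*v) + (((1*10+7)*10+4)*u^+4) + (8*w*v^+3) + ((6*10)*w*u*v^+2) + (((1*10+2)*10+8)*w*u^+2*v) + ((7*10+6)*w*u^+3) + (10*w^+2*v^+2) + ((3*10)*w^+2*u*v) + ((1*10+9)*w^+2*u^+2) + (4*w^+3*v) + (2*w^+3*u)) + ((4*u*v^+5) + (((1*10+1)*10)*u^+2*v^+4) + (((6*10)*10+8)*u^+3*v^+3) + ((((1*10+2)*10+9)*10+4)*u^+4*v^+2) + ((((1*10+1)*10+8)*10+8)*u^+5*v) + (((3*10+9)*10+6)*u^+6) + ((2*10)*w*u*v^+4) + (((2*10)*10)*w*u^+2*v^+3) + (((6*10)*10)*w*u^+3*v^+2) + (((7*10)*10)*w*u^+4*v) + (((2*10+8)*10)*w*u^+5)))); [done | ring | pos].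
Qed.

Lemma cEb (a b c : R) : 0 < a -> a < b -> b < c -> c < a + b ->
  c^+2 < a^+2 + b^+2 -> 0 < (-(b^+4+c^+4+a^+4-2*b^+2*c^+2-2*b^+2*a^+2)).
Proof.
move=> ha hab hbc htri hac.
have [w [u [v [hw [hu [hv [ea [eb ec]]]]]]]] : exists w u v, 0 < w /\ 0 < u /\ 0 < v /\
  a = w + u /\ b = w + u + v /\ c = w + 2*u + v.
  exists (a+b-c), (c-b), (b-a); do 6?split; (lra || ring).
subst a b c.
have hK : 0 < (w^+2 - 2*u^+2 - 2*u*v).
  have e : (w+u)^+2 + (w+u+v)^+2 - (w+2*u+v)^+2 = (w^+2 - 2*u^+2 - 2*u*v) by ring.
  by rewrite -e subr_gt0.
apply: (@cert_gen 1%N ((w^+2 - 2*u^+2 - 2*u*v) * ((2*v^+2) + ((1*10+4)*u*v) + (4*u^+2) + (4*w*v) + (4*w*u) + w^+2) + ((4*u*v^+3) + ((3*10)*u^+2*v^+2) + ((2*10+8)*u^+3*v) + ((1*10+2)*w*u*v^+2) + ((2*10)*w*u^+2*v)))); [done | ring | pos].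
Qed.

Lemma cEc (a b c : R) : 0 < a -> a < b -> b < c -> c < a + b ->
  c^+2 < a^+2 + b^+2 -> 0 < (-(c^+4+a^+4+b^+4-2*c^+2*a^+2-2*c^+2*b^+2)).
Proof.
move=> ha hab hbc htri hac.
have [w [u [v [hw [hu [hv [ea [eb ec]]]]]]]] : exists w u v, 0 < w /\ 0 < u /\ 0 < v /\
  a = w + u /\ b = w + u + v /\ c = w + 2*u + v.
  exists (a+b-c), (c-b), (b-a); do 6?split; (lra || ring).
subst a b c.
have hK : 0 < (w^+2 - 2*u^+2 - 2*u*v).
  have e : (w+u)^+2 + (w+u+v)^+2 - (w+2*u+v)^+2 = (w^+2 - 2*u^+2 - 2*u*v) by ring.
  by rewrite -e subr_gt0.
apply: (@cert_gen 1%N ((w^+2 - 2*u^+2 - 2*u*v) * ((2*v^+2) + ((1*10+8)*u*v) + ((1*10+8)*u^+2) + (4*w*v) + (8*w*u) + w^+2) + ((4*u*v^+3) + ((3*10+8)*u^+2*v^+2) + ((6*10+8)*u^+3*v) + ((3*10+4)*u^+4) + ((1*10+2)*w*u*v^+2) + ((3*10+6)*w*u^+2*v) + ((2*10+4)*w*u^+3)))); [done | ring | pos].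
Qed.

Lemma c713 (a b c : R) : 0 < a -> a < b -> b < c -> c < a + b ->
  c^+2 < a^+2 + b^+2 -> 0 < (3*a^+2*(b+c-a) - (a+b+c)*(a^+2-(b-c)^+2)).
Proof.
move=> ha hab hbc htri hac.
have [w [u [v [hw [hu [hv [ea [eb ec]]]]]]]] : exists w u v, 0 < w /\ 0 < u /\ 0 < v /\
  a = w + u /\ b = w + u + v /\ c = w + 2*u + v.
  exists (a+b-c), (c-b), (b-a); do 6?split; (lra || ring).
subst a b c.
have hK : 0 < (w^+2 - 2*u^+2 - 2*u*v).
  have e : (w+u)^+2 + (w+u+v)^+2 - (w+2*u+v)^+2 = (w^+2 - 2*u^+2 - 2*u*v) by ring.
  by rewrite -e subr_gt0.
apply: (@cert_gen 1%N ((w^+2 - 2*u^+2 - 2*u*v) * ((4*v) + (2*u)) + ((8*u*v^+2) + ((1*10+8)*u^+2*v) + (10*u^+3) + (8*w*u*v) + (7*w*u^+2)))); [done | ring | pos].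
Qed.

Lemma c1712 (a b c : R) : 0 < a -> a < b -> b < c -> c < a + b ->
  c^+2 < a^+2 + b^+2 -> 0 < (3*((b+c-a)*(c+a-b)*(a+b-c))*(a*(b+c)+b^+2+c^+2)^+2 - (a+b+c)*(a^+2*(b+c)+2*a*b*c-(b+c)*(b-c)^+2)^+2).
Proof.
move=> ha hab hbc htri hac.
have [w [u [v [hw [hu [hv [ea [eb ec]]]]]]]] : exists w u v, 0 < w /\ 0 < u /\ 0 < v /\
  a = w + u /\ b = w + u + v /\ c = w + 2*u + v.
  exists (a+b-c), (c-b), (b-a); do 6?split; (lra || ring).
subst a b c.
have hK : 0 < (w^+2 - 2*u^+2 - 2*u*v).
  have e : (w+u)^+2 + (w+u+v)^+2 - (w+2*u+v)^+2 = (w^+2 - 2*u^+2 - 2*u*v) by ring.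
  by rewrite -e subr_gt0.
apply: (@cert_gen 1%N ((w^+2 - 2*u^+2 - 2*u*v) * (((1*10+6)*v^+5) + (((7*10+4)*10+4)*u*v^+4) + ((((4*10+8)*10)*10)*u^+2*v^+3) + ((((10*10+4)*10+9)*10+6)*u^+3*v^+2) + ((((9*10+2)*10+6)*10+4)*u^+4*v) + ((((2*10+8)*10+3)*10+2)*u^+5) + ((9*10+6)*w*v^+4) + ((((1*10+4)*10)*10+8)*w*u*v^+3) + ((((4*10+6)*10+4)*10)*w*u^+2*v^+2) + ((((5*10+2)*10+6)*10+4)*w*u^+3*v) + ((((1*10+8)*10+7)*10+6)*w*u^+4) + (((2*10)*10+8)*w^+2*v^+3) + ((((1*10+4)*10)*10)*w^+2*u*v^+2) + ((((2*10+2)*10+4)*10+8)*w^+2*u^+2*v) + (((9*10+2)*10)*w^+2*u^+3) + (((1*10+9)*10+2)*w^+3*v^+2) + (((5*10+7)*10+6)*w^+3*u*v) + (((2*10+6)*10+4)*w^+3*u^+2) + ((6*10+4)*w^+4*v) + ((3*10+2)*w^+4*u)) + (((3*10+2)*u*v^+6) + ((((1*10+5)*10+1)*10+2)*u^+2*v^+5) + (((((1*10+1)*10)*10+2)*10+4)*u^+3*v^+4) + (((((3*10)*10+3)*10+9)*10+2)*u^+4*v^+3) + (((((3*10+9)*10+2)*10+1)*10+6)*u^+5*v^+2) + (((((2*10+3)*10+9)*10+6)*10+8)*u^+6*v) + ((((5*10+6)*10)*10)*u^+7) + (((2*10+2)*10+4)*w*u*v^+5) + ((((3*10+2)*10+3)*10+6)*w*u^+2*v^+4)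 + (((((1*10+2)*10+7)*10+4)*10+4)*w*u^+3*v^+3) + (((((2*10)*10+7)*10+4)*10)*w*u^+4*v^+2) + (((((1*10+4)*10+9)*10+6)*10+8)*w*u^+5*v) + ((((3*10+9)*10+6)*10)*w*u^+6)))); [done | ring | pos].
Qed.

Lemma cW (a b c : R) : 0 < a -> a < b -> b < c -> c < a + b ->
  c^+2 < a^+2 + b^+2 -> 0 < (-a^+3 + a^+2*(b+c) + a*(b^+2+c^+2) + 2*a*b*c - (b+c)*(b-c)^+2).
Proof.
move=> ha hab hbc htri hac.
have [w [u [v [hw [hu [hv [ea [eb ec]]]]]]]] : exists w u v, 0 < w /\ 0 < u /\ 0 < v /\
  a = w + u /\ b = w + u + v /\ c = w + 2*u + v.
  exists (a+b-c), (c-b), (b-a); do 6?split; (lra || ring).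
subst a b c.
have hK : 0 < (w^+2 - 2*u^+2 - 2*u*v).
  have e : (w+u)^+2 + (w+u+v)^+2 - (w+2*u+v)^+2 = (w^+2 - 2*u^+2 - 2*u*v) by ring.
  by rewrite -e subr_gt0.
apply: (@cert_gen 1%N ((w^+2 - 2*u^+2 - 2*u*v) * ((10*v) + ((2*10)*u) + (5*w)) + (((2*10+4)*u*v^+2) + ((7*10+2)*u^+2*v) + ((4*10+8)*u^+3) + (4*w*v^+2) + ((3*10+4)*w*u*v) + ((3*10+4)*w*u^+2)))); [done | ring | pos].
Qed.

Lemma c1329 (a b c : R) : 0 < a -> a < b -> b < c -> c < a + b ->
  c^+2 < a^+2 + b^+2 -> 0 < (((b+c-a)*(c+a-b)*(a+b-c))*(-a^+3 + a^+2*(b+c) + a*(b^+2+c^+2) + 2*a*b*c - (b+c)*(b-c)^+2)^+2 - 3*(a+b+c)*(c^+2+a^+2-b^+2)^+2*(a^+2+b^+2-c^+2)^+2).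
Proof.
move=> ha hab hbc htri hac.
have [w [u [v [hw [hu [hv [ea [eb ec]]]]]]]] : exists w u v, 0 < w /\ 0 < u /\ 0 < v /\
  a = w + u /\ b = w + u + v /\ c = w + 2*u + v.
  exists (a+b-c), (c-b), (b-a); do 6?split; (lra || ring).
subst a b c.
have hK : 0 < (w^+2 - 2*u^+2 - 2*u*v).
  have e : (w+u)^+2 + (w+u+v)^+2 - (w+2*u+v)^+2 = (w^+2 - 2*u^+2 - 2*u*v) by ring.
  by rewrite -e subr_gt0.
apply: (@cert_gen 1%N ((w^+2 - 2*u^+2 - 2*u*v) * (((6*10+4)*u*v^+6) + ((((3*10+5)*10+8)*10+4)*u^+2*v^+5) + (((((3*10+2)*10+7)*10+6)*10+8)*u^+3*v^+4) + ((((((1*10+1)*10+2)*10+4)*10+1)*10+6)*u^+4*v^+3) + ((((((1*10+7)*10+8)*10+8)*10+6)*10+4)*u^+5*v^+2) + ((((((1*10+3)*10+4)*10+1)*10+2)*10+8)*u^+6*v) + (((((3*10+8)*10+4)*10+3)*10+2)*u^+7) + (((4*10+8)*10)*w*u*v^+5) + ((((8*10+6)*10)*10+8)*w*u^+2*v^+4) + (((((4*10+3)*10+2)*10+9)*10+6)*w*u^+3*v^+3) + (((((8*10+9)*10+7)*10+7)*10+6)*w*u^+4*v^+2) + (((((8*10+2)*10+4)*10+4)*10)*w*u^+5*v) + (((((2*10+7)*10+8)*10+3)*10+2)*w*u^+6) + ((3*10+2)*w^+2*v^+5) + ((((1*10+6)*10+8)*10)*w^+2*u*v^+4) + (((((1*10+3)*10+9)*10+3)*10+6)*w^+2*u^+2*v^+3)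 + (((((4*10)*10)*10+6)*10+4)*w^+2*u^+3*v^+2) + (((((4*10+6)*10+8)*10+5)*10+6)*w^+2*u^+4*v) + (((((1*10+9)*10)*10+8)*10+8)*w^+2*u^+5) + (((1*10+7)*10+6)*w^+3*v^+4) + ((((3*10+1)*10+9)*10+2)*w^+3*u*v^+3) + (((((1*10+4)*10)*10+2)*10+4)*w^+3*u^+2*v^+2) + (((((2*10+1)*10+8)*10+5)*10+6)*w^+3*u^+3*v) + ((((10*10+8)*10+9)*10+2)*w^+3*u^+4) + (((3*10+6)*10)*w^+4*v^+3) + ((((3*10+2)*10)*10+8)*w^+4*u*v^+2) + ((((7*10+3)*10+4)*10+4)*w^+4*u^+2*v) + ((((4*10+5)*10+9)*10+2)*w^+4*u^+3) + (((3*10+4)*10)*w^+5*v^+2) + ((((1*10+5)*10+2)*10+4)*w^+5*u*v) + ((((1*10+2)*10+9)*10+6)*w^+5*u^+2) + (((1*10+4)*10+4)*w^+6*v) + (((2*10+1)*10+6)*w^+6*u) + ((1*10+6)*w^+7)) + ((((1*10+2)*10+8)*u^+2*v^+7) + ((((7*10+2)*10+9)*10+6)*u^+3*v^+6) + (((((7*10+2)*10+6)*10)*10+8)*u^+4*v^+5) + ((((((2*10+8)*10+9)*10+6)*10)*10)*u^+5*v^+4) + ((((((5*10+8)*10)*10+1)*10+6)*10)*u^+6*v^+3) + ((((((6*10+2)*10+2)*10+3)*10+3)*10+6)*u^+7*v^+2) + ((((((3*10+4)*10+2)*10+4)*10+3)*10+2)*u^+8*v) + (((((7*10+6)*10)*10+9)*10+6)*u^+9)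 + (((9*10+6)*10)*w*u^+2*v^+6) + (((((1*10+8)*10+2)*10+4)*10)*w*u^+3*v^+5) + (((((10*10+3)*10+7)*10+2)*10+8)*w*u^+4*v^+4) + ((((((2*10+6)*10+4)*10+1)*10+9)*10+2)*w*u^+5*v^+3) + ((((((3*10+3)*10+9)*10+1)*10+6)*10+8)*w*u^+6*v^+2) + ((((((2*10+1)*10+5)*10+2)*10+3)*10+2)*w*u^+7*v) + (((((5*10+3)*10+8)*10)*10+8)*w*u^+8)))); [done | ring | pos].
Qed.
Lemma sq_lt (x y : R) : 0 < x -> y^+2 < x^+2 -> y < x.
Proof. move=> hx h. nra. Qed.

Lemma tcmp (a qP rP qQ rQ x y : R) : 0 < a -> 0 < qP + rP -> 0 < qQ + rQ ->
  0 < qP * rQ - qQ * rP -> tdist a (Bary y qQ rQ) < tdist a (Bary x qP rP).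
Proof.
move=> ha hP hQ hX. rewrite /tdist /sdistC /= -subr_gt0.
have -> : a * qP / (qP + rP) - a * qQ / (qQ + rQ) =
  a * (qP * rQ - qQ * rP) / ((qP + rP) * (qQ + rQ)).
  by field; rewrite !lt0r_neq0.
by apply: divr_gt0; apply: mulr_gt0.
Qed.

End Aux.

Ltac nz := repeat (apply/andP; split); try done;
  try (apply: lt0r_neq0; pos).
Ltac nz1 := first [ done | assumption | apply: lt0r_neq0; pos; done
  | rewrite -oppr_eq0 opprD; apply: lt0r_neq0; pos; done ].
Ltac nz ::= repeat (apply/andP; split); nz1.

Theorem theorem6p4 (R : rcfType) (a b c : R)
  (ha : 0 < a) (hab : a < b) (hbc : b < c) (htri : c < a + b)
  (hacA : a^+2 < b^+2 + c^+2) (hacB : b^+2 < c^+2 + a^+2)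
  (hacC : c^+2 < a^+2 + b^+2) :
  let t := tdist a in
  t (X20 a b c) > t (X22 a b c) /\ t (X22 a b c) > t (X3 a b c) /\
      t (X3 a b c) > t (X8 a b c) /\ t (X8 a b c) > t (X9 a b c) /\
      t (X9 a b c) > t (X21 a b c) /\ t (X21 a b c) > t (X10 a b c) /\
      t (X10 a b c) > t (X2 a b c) /\ t (X2 a b c) > t (X1 a b c) /\
      t (X1 a b c) > t (X17 a b c) /\ t (X17 a b c) > t (X12 a b c) /\
      t (X12 a b c) > t (X7 a b c) /\ t (X7 a b c) > t (X13 a b c) /\
      t (X13 a b c) > t (X29 a b c) /\ t (X29 a b c) > t (X4 a b c) /\
      t (X4 a b c) > t (X27 a b c) /\ t (X27 a b c) > t (X19 a b c) /\
      t (X19 a b c) > t (X28 a b c) /\ t (X28 a b c) > t (X25 a b c) /\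
      t (X25 a b c) > t (X24 a b c) /\
      t (X24 a b c) > t (X23 a b c).
Proof.
move=> t; rewrite /t {t}.
have hb : 0 < b by lra.
have hc : 0 < c by lra.
have hcb : 0 < c - b by lra.
have hw : 0 < a + b - c by lra.
have hbca : 0 < b + c - a by lra.
have hcab : 0 < c + a - b by lra.
have hbc' : 0 < b + c by lra.
have hca : 0 < c + a by lra.
have hab' : 0 < a + b by lra.
have habc : 0 < a + b + c by lra.
have hSA : 0 < b^+2 + c^+2 - a^+2 by lra.
have hSB : 0 < c^+2 + a^+2 - b^+2 by lra.
have hSC : 0 < a^+2 + b^+2 - c^+2 by lra.
have hSAb : 0 < SA b c a by rewrite /SA; apply: divr_gt0 => //; lra.
have hSAc : 0 < SA c a b by rewrite /SA; apply: divr_gt0 => //; lra.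
have f38 := @c38 R a b c ha hab hbc htri hacC.
have f2110 := @c2110 R a b c ha hab hbc htri hacC.
have f2423 := @c2423 R a b c ha hab hbc htri hacC.
have f23s := @c23s R a b c ha hab hbc htri hacC.
have fEb := @cEb R a b c ha hab hbc htri hacC.
have fEc := @cEc R a b c ha hab hbc htri hacC.
have f713 := @c713 R a b c ha hab hbc htri hacC.
have f1712 := @c1712 R a b c ha hab hbc htri hacC.
have fW := @cW R a b c ha hab hbc htri hacC.
have f1329 := @c1329 R a b c ha hab hbc htri hacC.
have hs : 0 < Num.sqrt 3 :> R by rewrite sqrtr_gt0; lra.
have hs2 : Num.sqrt 3 ^+ 2 = 3 :> R by rewrite sqr_sqrtr //; lra.
have hH : 2 * a^+2 * b^+2 + 2 * b^+2 * c^+2 + 2 * c^+2 * a^+2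
            - a^+4 - b^+4 - c^+4 = (a+b+c)*(b+c-a)*(c+a-b)*(a+b-c) by ring.
have hS : 0 < S2 a b c by rewrite /S2 hH; apply: divr_gt0; [rewrite sqrtr_gt0; pos | lra].
have hS2 : S2 a b c ^+ 2 = (a+b+c)*(b+c-a)*(c+a-b)*(a+b-c) / 4.
  rewrite /S2 hH expr_div_n sqr_sqrtr; first by field.
  by apply: ltW; pos.

have s20 : 0 < (-(3*b^+4 - 2*b^+2*(c^+2+a^+2) - (c^+2-a^+2)^+2)) + (-(3*c^+4 - 2*c^+2*(a^+2+b^+2) - (a^+2-b^+2)^+2)).
  by apply: (@cert_gen R 1%N (2*(c^+2 + a^+2 - b^+2)*(a^+2 + b^+2 - c^+2))); [done | ring | pos].
have s22 : 0 < (b^+2*(c^+4+a^+4-b^+4)) + (c^+2*(a^+4+b^+4-c^+4)).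
  by apply: (@cert_gen R 1%N ((c^+2 + a^+2 - b^+2)*(a^+2 + b^+2 - c^+2)*(b^+2+c^+2))); [done | ring | pos].
have s3 : 0 < (b^+2*(c^+2+a^+2-b^+2)) + (c^+2*(a^+2+b^+2-c^+2)) by pos.
have s8 : 0 < (c+a-b) + (a+b-c) by pos.
have s9 : 0 < (b*(c+a-b)) + (c*(a+b-c)) by pos.
have s21 : 0 < (b*(a*(b^+2+c^+2-a^+2)+b*(c^+2+a^+2-b^+2))) + (c*(a*(b^+2+c^+2-a^+2)+c*(a^+2+b^+2-c^+2))) by pos.
have s10 : 0 < (c+a) + (a+b) by pos.
have s2 : 0 < (1) + (1) :> R by lra.
have s1 : 0 < (b) + (c) by pos.
have s17 : 0 < (SA c a b + Num.sqrt 3 * S2 a b c) + (SA b c a + Num.sqrt 3 * S2 a b c) by pos.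
have s12 : 0 < ((c+a)^+2*(a+b-c)) + ((a+b)^+2*(c+a-b)) by pos.
have s7 : 0 < (a+b-c) + (c+a-b) by pos.
have s13 : 0 < (Num.sqrt 3 * SA c a b + S2 a b c) + (Num.sqrt 3 * SA b c a + S2 a b c) by pos.
have s29 : 0 < ((a^+2 + b^+2 - c^+2)*(a*(b^+2+c^+2-a^+2)+b*(c^+2+a^+2-b^+2))) + ((c^+2 + a^+2 - b^+2)*(a*(b^+2+c^+2-a^+2)+c*(a^+2+b^+2-c^+2))) by pos.
have s4 : 0 < ((a^+2 + b^+2 - c^+2)) + ((c^+2 + a^+2 - b^+2)) by pos.
have s27 : 0 < ((a+b)*(a^+2 + b^+2 - c^+2)) + ((c+a)*(c^+2 + a^+2 - b^+2)) by pos.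
have s19 : 0 < (b*(a^+2 + b^+2 - c^+2)) + (c*(c^+2 + a^+2 - b^+2)) by pos.
have s28 : 0 < (b*(a+b)*(a^+2 + b^+2 - c^+2)) + (c*(c+a)*(c^+2 + a^+2 - b^+2)) by pos.
have s25 : 0 < (b^+2*(a^+2 + b^+2 - c^+2)) + (c^+2*(c^+2 + a^+2 - b^+2)) by pos.
have s24 : 0 < (b^+2*(-(b^+4+c^+4+a^+4-2*b^+2*c^+2-2*b^+2*a^+2))*(a^+2 + b^+2 - c^+2)) + (c^+2*(-(c^+4+a^+4+b^+4-2*c^+2*a^+2-2*c^+2*b^+2))*(c^+2 + a^+2 - b^+2)) by pos.
have s23 : 0 < (-(b^+2*(c^+4+a^+4-b^+4-c^+2*a^+2))) + (-(c^+2*(a^+4+b^+4-c^+4-a^+2*b^+2))).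
  by apply: (@cert_gen R 1%N ((-(b^+2*(c^+4+a^+4-b^+4-c^+2*a^+2) + c^+2*(a^+4+b^+4-c^+4-a^+2*b^+2))))); [done | ring | pos].
have E20 : tdist a (X20 a b c) = tdist a (Bary 0 (-(3*b^+4 - 2*b^+2*(c^+2+a^+2) - (c^+2-a^+2)^+2)) (-(3*c^+4 - 2*c^+2*(a^+2+b^+2) - (a^+2-b^+2)^+2))).
  by rewrite /X20 /cyclic_pt /tdist /sdistC /=; field; nz.
have E22 : tdist a (X22 a b c) = tdist a (Bary 0 (b^+2*(c^+4+a^+4-b^+4)) (c^+2*(a^+4+b^+4-c^+4))).
  by rewrite /X22 /cyclic_pt /tdist /sdistC /=; field; nz.
have E3 : tdist a (X3 a b c) = tdist a (Bary 0 (b^+2*(c^+2+a^+2-b^+2)) (c^+2*(a^+2+b^+2-c^+2))).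
  by rewrite /X3 /cyclic_pt /tdist /sdistC /=; field; nz.
have E8 : tdist a (X8 a b c) = tdist a (Bary 0 (c+a-b) (a+b-c)).
  by rewrite /X8 /cyclic_pt /tdist /sdistC /=; field; nz.
have E9 : tdist a (X9 a b c) = tdist a (Bary 0 (b*(c+a-b)) (c*(a+b-c))).
  by rewrite /X9 /cyclic_pt /tdist /sdistC /=; field; nz.
have E21 : tdist a (X21 a b c) = tdist a (Bary 0 (b*(a*(b^+2+c^+2-a^+2)+b*(c^+2+a^+2-b^+2))) (c*(a*(b^+2+c^+2-a^+2)+c*(a^+2+b^+2-c^+2)))).
  by rewrite /X21 /cyclic_pt /cosBC /cosA /tdist /sdistC /=; field; nz.
have E10 : tdist a (X10 a b c) = tdist a (Bary 0 (c+a) (a+b)).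
  by rewrite /X10 /cyclic_pt /tdist /sdistC /=; field; nz.
have E2 : tdist a (X2 a b c) = tdist a (Bary 0 (1) (1)).
  by rewrite /X2 /cyclic_pt /tdist /sdistC /=; field; nz.
have E1 : tdist a (X1 a b c) = tdist a (Bary 0 (b) (c)).
  by rewrite /X1 /cyclic_pt /tdist /sdistC /=; field; nz.
have E17 : tdist a (X17 a b c) = tdist a (Bary 0 (SA c a b + Num.sqrt 3 * S2 a b c) (SA b c a + Num.sqrt 3 * S2 a b c)).
  by rewrite /X17 /cyclic_pt /tdist /sdistC /=; field; nz.
have E12 : tdist a (X12 a b c) = tdist a (Bary 0 ((c+a)^+2*(a+b-c)) ((a+b)^+2*(c+a-b))).
  by rewrite /X12 /cyclic_pt /tdist /sdistC /=; field; nz.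
have E7 : tdist a (X7 a b c) = tdist a (Bary 0 (a+b-c) (c+a-b)).
  by rewrite /X7 /cyclic_pt /tdist /sdistC /=; field; nz.
have E13 : tdist a (X13 a b c) = tdist a (Bary 0 (Num.sqrt 3 * SA c a b + S2 a b c) (Num.sqrt 3 * SA b c a + S2 a b c)).
  by rewrite /X13 /cyclic_pt /tdist /sdistC /=; field; nz.
have E29 : tdist a (X29 a b c) = tdist a (Bary 0 ((a^+2 + b^+2 - c^+2)*(a*(b^+2+c^+2-a^+2)+b*(c^+2+a^+2-b^+2))) ((c^+2 + a^+2 - b^+2)*(a*(b^+2+c^+2-a^+2)+c*(a^+2+b^+2-c^+2)))).
  by rewrite /X29 /cyclic_pt /SA /cosBC /cosA /tdist /sdistC /=; field; nz.
have E4 : tdist a (X4 a b c) = tdist a (Bary 0 ((a^+2 + b^+2 - c^+2)) ((c^+2 + a^+2 - b^+2))).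
  by rewrite /X4 /cyclic_pt /SA /tdist /sdistC /=; field; nz.
have E27 : tdist a (X27 a b c) = tdist a (Bary 0 ((a+b)*(a^+2 + b^+2 - c^+2)) ((c+a)*(c^+2 + a^+2 - b^+2))).
  by rewrite /X27 /cyclic_pt /SA /tdist /sdistC /=; field; nz.
have E19 : tdist a (X19 a b c) = tdist a (Bary 0 (b*(a^+2 + b^+2 - c^+2)) (c*(c^+2 + a^+2 - b^+2))).
  by rewrite /X19 /cyclic_pt /SA /tdist /sdistC /=; field; nz.
have E28 : tdist a (X28 a b c) = tdist a (Bary 0 (b*(a+b)*(a^+2 + b^+2 - c^+2)) (c*(c+a)*(c^+2 + a^+2 - b^+2))).
  by rewrite /X28 /cyclic_pt /SA /tdist /sdistC /=; field; nz.
have E25 : tdist a (X25 a b c) = tdist a (Bary 0 (b^+2*(a^+2 + b^+2 - c^+2)) (c^+2*(c^+2 + a^+2 - b^+2))).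
  by rewrite /X25 /cyclic_pt /SA /tdist /sdistC /=; field; nz.
have n24 : b^+2*(b^+4+c^+4+a^+4-2*b^+2*c^+2-2*b^+2*a^+2)*(a^+2 + b^+2 - c^+2) + c^+2*(c^+4+a^+4+b^+4-2*c^+2*a^+2-2*c^+2*b^+2)*(c^+2 + a^+2 - b^+2) != 0.
  rewrite -oppr_eq0; apply: lt0r_neq0.
  by apply: (@cert_gen R 1%N ((b^+2*(-(b^+4+c^+4+a^+4-2*b^+2*c^+2-2*b^+2*a^+2))*(a^+2 + b^+2 - c^+2)) + (c^+2*(-(c^+4+a^+4+b^+4-2*c^+2*a^+2-2*c^+2*b^+2))*(c^+2 + a^+2 - b^+2)))); [done | ring | exact s24].
have E24 : tdist a (X24 a b c) = tdist a (Bary 0 (b^+2*(-(b^+4+c^+4+a^+4-2*b^+2*c^+2-2*b^+2*a^+2))*(a^+2 + b^+2 - c^+2)) (c^+2*(-(c^+4+a^+4+b^+4-2*c^+2*a^+2-2*c^+2*b^+2))*(c^+2 + a^+2 - b^+2))).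
  by rewrite /X24 /cyclic_pt /tdist /sdistC /=; field; nz.
have n23a : - (b^+2*(c^+4+a^+4-b^+4-(c*a)^+2)) - c^+2*(a^+4+b^+4-c^+4-(a*b)^+2) != 0.
  by apply: lt0r_neq0; apply: (@cert_gen R 1%N ((-(b^+2*(c^+4+a^+4-b^+4-c^+2*a^+2))) + (-(c^+2*(a^+4+b^+4-c^+4-a^+2*b^+2))))); [done | ring | exact s23].
have n23b : b^+2*(c^+4+a^+4-b^+4-(c*a)^+2) + c^+2*(a^+4+b^+4-c^+4-(a*b)^+2) != 0.
  rewrite -oppr_eq0; apply: lt0r_neq0.
  by apply: (@cert_gen R 1%N ((-(b^+2*(c^+4+a^+4-b^+4-c^+2*a^+2))) + (-(c^+2*(a^+4+b^+4-c^+4-a^+2*b^+2))))); [done | ring | exact s23].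
have E23 : tdist a (X23 a b c) = tdist a (Bary 0 (-(b^+2*(c^+4+a^+4-b^+4-c^+2*a^+2))) (-(c^+2*(a^+4+b^+4-c^+4-a^+2*b^+2)))).
  by rewrite /X23 /cyclic_pt /tdist /sdistC /=; field; nz.
rewrite E20 E22 E3 E8 E9 E21 E10 E2 E1 E17 E12 E7 E13 E29 E4 E27 E19 E28 E25 E24 E23.
clear E20 E22 E3 E8 E9 E21 E10 E2 E1 E17 E12 E7 E13 E29 E4 E27 E19 E28 E25 E24 E23.
move: hS hS2 s17 s13; generalize (S2 a b c) => S hS hS2 s17 s13.
have F117 : 0 < ((b+c)^+2 - a^+2)/2 - Num.sqrt 3 * S.
  rewrite subr_gt0; apply: sq_lt.
    by apply: (@cert_gen R 2%N ((b+c-a)*(a+b+c))); [done | rewrite /SA; field | pos].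
  rewrite -subr_gt0 !exprMn hs2 hS2.
  by apply: (@cert_gen R 1%N ((b+c-a)*(a+b+c)*(b^+2 - b*c + c^+2 - a^+2))); [done | rewrite /SA; field | pos].
have F1712 : 0 < Num.sqrt 3 * S * (a*(b+c)+b^+2+c^+2)
    - (a+b+c)*((a^+2*(b+c)+2*a*b*c-(b+c)*(b-c)^+2)/2).
  rewrite subr_gt0; apply: sq_lt; first by pos.
  rewrite -subr_gt0 !exprMn hs2 hS2.
  by apply: (@cert_gen R 4%N ((a+b+c)*(3*((b+c-a)*(c+a-b)*(a+b-c))*(a*(b+c)+b^+2+c^+2)^+2 - (a+b+c)*(a^+2*(b+c)+2*a*b*c-(b+c)*(b-c)^+2)^+2))); [done | rewrite /SA; field | pos].
have F713 : 0 < Num.sqrt 3 * a * (b+c-a) - 2 * S.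
  rewrite subr_gt0; apply: sq_lt; first by pos.
  rewrite -subr_gt0 !exprMn hs2 hS2.
  by apply: (@cert_gen R 1%N ((b+c-a)*(3*a^+2*(b+c-a) - (a+b+c)*(a^+2-(b-c)^+2)))); [done | rewrite /SA; field | pos].
have F1329 : 0 < S * (-a^+3 + a^+2*(b+c) + a*(b^+2+c^+2) + 2*a*b*c - (b+c)*(b-c)^+2)
    - Num.sqrt 3 * (a+b+c) * (c^+2+a^+2-b^+2) * (a^+2+b^+2-c^+2) / 2.
  rewrite subr_gt0; apply: sq_lt; first by pos.
  rewrite -subr_gt0 !exprMn hs2 hS2.
  by apply: (@cert_gen R 4%N ((a+b+c)*(((b+c-a)*(c+a-b)*(a+b-c))*(-a^+3 + a^+2*(b+c) + a*(b^+2+c^+2) + 2*a*b*c - (b+c)*(b-c)^+2)^+2 - 3*(a+b+c)*(c^+2+a^+2-b^+2)^+2*(a^+2+b^+2-c^+2)^+2))); [done | rewrite /SA; field | pos].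
split.
  apply: tcmp; [exact ha | exact s20 | exact s22 |].
  by apply: (@cert_gen R 1%N ((c-b)*(b+c)*(b^+2 + c^+2 - a^+2)^+2*(c^+2 + a^+2 - b^+2)*(a^+2 + b^+2 - c^+2))); [done | ring | pos].
split.
  apply: tcmp; [exact ha | exact s22 | exact s3 |].
  by apply: (@cert_gen R 1%N (2*(c-b)*a^+2*b^+2*c^+2*(b+c)*(b^+2 + c^+2 - a^+2))); [done | ring | pos].
split.
  apply: tcmp; [exact ha | exact s3 | exact s8 |].
  by apply: (@cert_gen R 1%N ((c-b)*(a+b+c)*(-(a^+2*b) - a^+2*c + 2*a*b*c + b^+3 - b^+2*c - b*c^+2 + c^+3))); [done | ring | pos].
split.
  apply: tcmp; [exact ha | exact s8 | exact s9 |].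
  by apply: (@cert_gen R 1%N ((c-b)*(a+b-c)*(c+a-b))); [done | ring | pos].
split.
  apply: tcmp; [exact ha | exact s9 | exact s21 |].
  by apply: (@cert_gen R 1%N ((c-b)*b*c*(a+b-c)*(b+c-a)*(c+a-b))); [done | ring | pos].
split.
  apply: tcmp; [exact ha | exact s21 | exact s10 |].
  by apply: (@cert_gen R 1%N ((c-b)*(b+c-a)*(a+b+c)*(b^+2 - b*c + c^+2 - a^+2))); [done | ring | pos].
split.
  apply: tcmp; [exact ha | exact s10 | exact s2 |].
  by apply: (@cert_gen R 1%N ((c-b))); [done | ring | pos].
split.
  apply: tcmp; [exact ha | exact s2 | exact s1 |].
  by apply: (@cert_gen R 1%N ((c-b))); [done | ring | pos].
split.
  apply: tcmp; [exact ha | exact s1 | exact s17 |].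
  by apply: (@cert_gen R 1%N ((c-b)*(((b+c)^+2 - a^+2)/2 - Num.sqrt 3 * S))); [done | rewrite /SA; field | pos].
split.
  apply: tcmp; [exact ha | exact s17 | exact s12 |].
  by apply: (@cert_gen R 1%N ((c-b)*(Num.sqrt 3 * S * (a*(b+c)+b^+2+c^+2) - (a+b+c)*((a^+2*(b+c)+2*a*b*c-(b+c)*(b-c)^+2)/2)))); [done | rewrite /SA; field | pos].
split.
  apply: tcmp; [exact ha | exact s12 | exact s7 |].
  by apply: (@cert_gen R 1%N ((c-b)*(a+b-c)*(c+a-b)*(2*a+b+c))); [done | ring | pos].
split.
  apply: tcmp; [exact ha | exact s7 | exact s13 |].
  by apply: (@cert_gen R 1%N ((c-b)*(Num.sqrt 3 * a * (b+c-a) - 2 * S))); [done | rewrite /SA; field | pos].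
split.
  apply: tcmp; [exact ha | exact s13 | exact s29 |].
  by apply: (@cert_gen R 1%N ((c-b)*(b+c-a)*(S * (-a^+3 + a^+2*(b+c) + a*(b^+2+c^+2) + 2*a*b*c - (b+c)*(b-c)^+2) - Num.sqrt 3 * (a+b+c) * (c^+2+a^+2-b^+2) * (a^+2+b^+2-c^+2) / 2))); [done | rewrite /SA; field | pos].
split.
  apply: tcmp; [exact ha | exact s29 | exact s4 |].
  by apply: (@cert_gen R 1%N ((c-b)*(b+c-a)*(a+b+c)*(c^+2 + a^+2 - b^+2)*(a^+2 + b^+2 - c^+2))); [done | ring | pos].
split.
  apply: tcmp; [exact ha | exact s4 | exact s27 |].
  by apply: (@cert_gen R 1%N ((c-b)*(c^+2 + a^+2 - b^+2)*(a^+2 + b^+2 - c^+2))); [done | ring | pos].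
split.
  apply: tcmp; [exact ha | exact s27 | exact s19 |].
  by apply: (@cert_gen R 1%N ((c-b)*a*(c^+2 + a^+2 - b^+2)*(a^+2 + b^+2 - c^+2))); [done | ring | pos].
split.
  apply: tcmp; [exact ha | exact s19 | exact s28 |].
  by apply: (@cert_gen R 1%N ((c-b)*b*c*(c^+2 + a^+2 - b^+2)*(a^+2 + b^+2 - c^+2))); [done | ring | pos].
split.
  apply: tcmp; [exact ha | exact s28 | exact s25 |].
  by apply: (@cert_gen R 1%N ((c-b)*a*b*c*(c^+2 + a^+2 - b^+2)*(a^+2 + b^+2 - c^+2))); [done | ring | pos].
split.
  apply: tcmp; [exact ha | exact s25 | exact s24 |].
  by apply: (@cert_gen R 1%N (2*(c-b)*a^+2*b^+2*c^+2*(b+c)*(c^+2 + a^+2 - b^+2)*(a^+2 + b^+2 - c^+2))); [done | ring | pos].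
  apply: tcmp; [exact ha | exact s24 | exact s23 |].
  by apply: (@cert_gen R 1%N ((c-b)*a^+2*b^+2*c^+2*(b+c)*(a^+6 - a^+4*b^+2 - a^+4*c^+2 - a^+2*b^+4 + 6*a^+2*b^+2*c^+2 - a^+2*c^+4 + b^+6 - b^+4*c^+2 - b^+2*c^+4 + c^+6))); [done | ring | pos].
Qed.
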